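(* There exist two phylogenetic networks $N_1$ and $N_2$ of class I on the label set $S=\{1,2,3,4,5\}$ (in the sense defined in the context) such that $N_1\not\cong N_2$ but $\theta_{AB}(N_1)=\theta_{AB}(N_2)$.
   Context: A DAG $N=(V,E)$ is labeled in a finite set $S$ if its leaves (nodes of out-degree 0) are bijectively labeled by $S$; leaves are identified with their labels. A node is a tree node if its in-degree is at most 1 and a hybrid node if its in-degree is greater than 1; the root is the node of in-degree 0. Two DAGs labeled in $S$ are isomorphic ($\cong$) if there is an isomorphism of directed graphs preserving leaf labels. A path $u\rightsquigarrow v$ is a sequence of nodes $u=v_0,\dots,v_k=v$ with $(v_{i-1},v_i)\in E$. For a node $u$: $C(u)$ is the set of leaves that are descendants of $u$; $A(u)\subseteq C(u)$ is the set of leaves $s$ such that every path from a root to $s$ contains $u$; $B(u)=C(u)\setminus A(u)$. For an arc $e=(u,v)$, its $AB$-weighted tripartition $\theta_{AB}(e)$ is the triple $(A(v),B(v),S\setminus C(v))$ in which every leaf $s\in A(v)\cup B(v)$ is additionally weighted by the maximum number of hybrid nodes contained in a path from $v$ to $s$ (counting $v$ and $s$ themselves). $\theta_{AB}(N)=\{\theta_{AB}(e)\mid e\in E\}$. A phylogenetic network on $S$ (in this sense) is a rooted DAG labeled in $S$ such that: (1) every node has in-degree and out-degree in $\{0,1,2\}$ and no node has in-degree equal to its out-degree; (2) if a node has two children, at least one of them is a tree node; (3a) if $u_1,u_2$ are the parents of a hybrid node, there is no path $u_1\rightsquigarrow u_2$ nor $u_2\rightsquigarrow u_1$; (3b) if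 $u_1,u_2$ are the parents of a hybrid node $u$, $v_1,v_2$ are the parents of a hybrid node $v$, and there is a path $u_1\rightsquigarrow v_1$, then there is no path $v_2\rightsquigarrow u_1$ nor $v_2\rightsquigarrow u_2$. Such a network is of class I if every hybrid node has at least one parent that is a tree node. *)

(* Defs.v *)
From mathcomp Require Import all_boot.
Set Implicit Arguments. Unset Strict Implicit. Unset Printing Implicit Defensive.

Definition S : finType := {x : 'I_6 | (0 < x)%N}.

Record network := Network {
  nV : finType;
  nE : rel nV;
  nlab : S -> nV
}.

Arguments nE : clear implicits.
Arguments nlab : clear implicits.

Section Defs.
Variable N : network.
Local Notation V := (nV N).
Local Notation E := (nE N).
Local Notation lab := (nlab N).

Definition indeg (v : V) : nat := #|[pred u | E u v]|.
Definition outdeg (v : V) : nat := #|[pred w | E v w]|.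
Definition tree_node (v : V) : bool := (indeg v <= 1)%N.
Definition hybrid (v : V) : bool := (1 < indeg v)%N.
Definition is_root (v : V) : bool := indeg v == 0%N.

Definition acyclic : Prop := forall u v, E u v -> ~~ connect E v u.
Definition rooted : Prop := exists r, forall v, is_root v <-> v = r.
Definition labeled_in_S : Prop :=
  injective lab /\ forall v, outdeg v = 0%N <-> exists s, lab s = v.

Definition cond1 : Prop :=
  forall v, [/\ (indeg v <= 2)%N, (outdeg v <= 2)%N & indeg v != outdeg v].
Definition cond2 : Prop :=
  forall v w1 w2, E v w1 -> E v w2 -> w1 != w2 -> tree_node w1 \/ tree_node w2.
Definition cond3a : Prop :=
  forall u u1 u2, E u1 u -> E u2 u -> u1 != u2 -> ~~ connect E u1 u2.
Definition cond3b : Prop :=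
  forall u u1 u2 v v1 v2,
    u != v ->
    E u1 u -> E u2 u -> u1 != u2 ->
    E v1 v -> E v2 v -> v1 != v2 ->
    connect E u1 v1 -> ~~ connect E v2 u1 /\ ~~ connect E v2 u2.

Definition phylogenetic_network : Prop :=
  [/\ acyclic, rooted, labeled_in_S, cond1 & [/\ cond2, cond3a & cond3b]].

Definition class_I : Prop :=
  forall v, hybrid v -> exists u, E u v /\ tree_node u.

Definition inC (u : V) (s : S) : Prop := connect E u (lab s).
Definition inA (u : V) (s : S) : Prop :=
  inC u s /\
  forall (r : V) (p : seq V), is_root r -> path E r p -> last r p = lab s ->
    u \in r :: p.
Definition inB (u : V) (s : S) : Prop := inC u s /\ ~ inA u s.

Definition hybcount (v : V) (p : seq V) : nat := count hybrid (v :: p).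
Definition is_weight (v : V) (s : S) (n : nat) : Prop :=
  (exists p, [/\ path E v p, last v p = lab s & hybcount v p = n]) /\
  (forall p, path E v p -> last v p = lab s -> (hybcount v p <= n)%N).
End Defs.

(* Equality of the AB-weighted tripartitions of arcs ending in v1 (in N1) and v2 (in N2):
   same A, same B, same S \ C, and same weights on A u B. *)
Definition same_wtrip (N1 N2 : network) (v1 : nV N1) (v2 : nV N2) : Prop :=
  forall s : S,
    [/\ inA v1 s <-> inA v2 s,
        inB v1 s <-> inB v2 s,
        ~ inC v1 s <-> ~ inC v2 s
      & inC v1 s -> forall n, is_weight v1 s n <-> is_weight v2 s n].

Definition theta_AB_eq (N1 N2 : network) : Prop :=
  (forall u1 v1 : nV N1, nE N1 u1 v1 ->
     exists u2 v2 : nV N2, nE N2 u2 v2 /\ same_wtrip v1 v2) /\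
  (forall u2 v2 : nV N2, nE N2 u2 v2 ->
     exists u1 v1 : nV N1, nE N1 u1 v1 /\ same_wtrip v1 v2).

Definition isomorphic (N1 N2 : network) : Prop :=
  exists f : nV N1 -> nV N2,
    [/\ bijective f,
        forall u v, nE N1 u v <-> nE N2 (f u) (f v)
      & forall s, f (nlab N1 s) = nlab N2 s].

(* Main.v *)
Require Import Defs.
From mathcomp Require Import all_boot.
Set Implicit Arguments. Unset Strict Implicit. Unset Printing Implicit Defensive.

Section G.
Variable N : network.
Local Notation V := (nV N).
Local Notation E := (nE N).
Local Notation lab := (nlab N).
Variable l : seq V.
Hypothesis lP : forall x, x \in l.
Hypothesis lU : uniq l.
Variable lS : seq S.
Hypothesis lSP : forall s, s \in lS.
Variable K : nat.

Lemma allL (P : pred V) : all P l -> forall x, P x.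
Proof. by move/allP=> H x; apply: H. Qed.

Definition indeg' v := count (fun u => E u v) l.
Definition outdeg' v := count (fun w => E v w) l.
Definition hyb' v := (1 < indeg' v)%N.
Definition tree' v := (indeg' v <= 1)%N.

Lemma permL : perm_eq (enum V) l.
Proof. by apply: uniq_perm; [apply: enum_uniq | apply: lU | move=> x; rewrite mem_enum lP]. Qed.

Lemma indegE v : indeg v = indeg' v.
Proof.
rewrite /indeg' -(permP permL).
by rewrite enumT /indeg cardE -size_filter.
Qed.
Lemma outdegE v : outdeg v = outdeg' v.
Proof.
rewrite /outdeg' -(permP permL).
by rewrite enumT /outdeg cardE -size_filter.
Qed.
Lemma hybridE v : hybrid v = hyb' v.
Proof. by rewrite /hybrid indegE. Qed.
Lemma treeE v : tree_node v = tree' v.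
Proof. by rewrite /tree_node indegE. Qed.

Fixpoint exb n v : bool :=
  if n is n'.+1 then has (fun w => if E v w then exb n' w else false) l else true.

Lemma exb_path n v p : path E v p -> (n <= size p)%N -> exb n v.
Proof.
elim: n v p => [//|n IH] v [//|w p] /= /andP[Evw Hp] Hs.
apply/hasP; exists w; first exact: lP.
by rewrite Evw; apply: IH Hp Hs.
Qed.

Definition boundb := all (fun v => ~~ exb K v) l.

Lemma bound_path : boundb -> forall v p, path E v p -> (size p < K)%N.
Proof.
move=> Hb v p Hp; rewrite ltnNge; apply/negP => Hs.
by have := allL Hb v; rewrite (exb_path Hp Hs).
Qed.

Fixpoint rk (e : rel V) n x y : bool :=
  if n is n'.+1 then (x == y) || has (fun w => if e x w then rk e n' w y else false) l
  else x == y.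

Lemma rk_sound e n x y : rk e n x y -> connect e x y.
Proof.
elim: n x => [|n IH] x /=; first by move/eqP->; apply: connect0.
case/orP; first by move/eqP->; apply: connect0.
case/hasP=> w _; case Exw: (e x w) => // /IH Hc.
by apply: connect_trans Hc; apply: connect1.
Qed.

Lemma rk_complete e n x p : path e x p -> (size p <= n)%N -> rk e n x (last x p).
Proof.
elim: n x p => [|n IH] x [|w p] //= Hp Hs; rewrite ?eqxx //.
case/andP: Hp => exw Hp; apply/orP; right; apply/hasP; exists w; first exact: lP.
by rewrite exw; apply: IH.
Qed.

Lemma rkE e x y : subrel e E -> boundb -> connect e x y = rk e K x y.
Proof.
move=> He Hb; apply/idP/idP; last exact: rk_sound.
case/connectP=> p Hp ->; apply: rk_complete => //.
by apply: ltnW; apply: (bound_path Hb); apply: sub_path Hp.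
Qed.

Definition Ru u : rel V := fun x y => E x y && (y != u).

Lemma Ru_sub u : subrel (Ru u) E.
Proof. by move=> x y /andP[]. Qed.

Lemma Ru_notin u r p : path (Ru u) r p -> u \notin p.
Proof.
elim: p r => [//|w p IH] r /= /andP[/andP[_ wu] Hp].
by rewrite inE negb_or eq_sym wu (IH _ Hp).
Qed.

Lemma Ru_path u r p : path E r p -> u \notin p -> path (Ru u) r p.
Proof.
elim: p r => [//|w p IH] r /= /andP[Erw Hp]; rewrite inE negb_or => /andP[uw up].
by rewrite /Ru Erw eq_sym uw /= IH.
Qed.

Definition inAb u s : bool :=
  rk E K u (lab s) &&
  all (fun r => if indeg' r == 0 then (r == u) || ~~ rk (Ru u) K r (lab s) else true) l.

Lemma inAP u s : boundb -> inA u s <-> inAb u s.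
Proof.
move=> Hb; rewrite /inA /inAb /inC (rkE _ _ (fun x y (h : E x y) => h)) //; split.
- case=> -> H /=; apply/allP=> r _; case: ifP => // r0.
  case ru: (r == u) => //=; apply/negP.
  rewrite -(rkE _ _ (@Ru_sub u)) //; case/connectP=> p Hp Hl.
  have := H r p; rewrite /is_root indegE r0 => /(_ isT (sub_path (@Ru_sub u) Hp) (esym Hl)).
  by rewrite inE eq_sym ru (negbTE (Ru_notin Hp)).
- case/andP=> -> /allP H; split => // r p Hr Hp Hl.
  have := H r (lP r); move: Hr; rewrite /is_root indegE => -> /=.
  rewrite inE; case ru: (r == u); first by rewrite eq_sym ru.
  rewrite /= eq_sym ru /=; apply: contraR => up.
  rewrite -(rkE _ _ (@Ru_sub u)) //; apply/connectP; exists p => //.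
  exact: Ru_path.
Qed.

Lemma inCP u s : boundb -> inC u s <-> rk E K u (lab s).
Proof. by move=> Hb; rewrite /inC (rkE _ _ (fun x y (h : E x y) => h)). Qed.

Definition fmax (f : V -> nat) := foldr (fun w acc => maxn (f w) acc) 0 l.

Lemma fmax_ge f w : (f w <= fmax f)%N.
Proof.
rewrite /fmax; have := lP w; elim: l => [//|a t IH] /=.
rewrite inE => /orP[/eqP->|/IH H]; first exact: leq_maxl.
by apply: leq_trans H (leq_maxr _ _).
Qed.

Lemma fmax_ex f : fmax f = 0 \/ exists w, fmax f = f w.
Proof.
rewrite /fmax; elim: l => [|a t IH] /=; first by left.
rewrite {1}/maxn; case: ltnP => _ //.
by right; exists a.
Qed.

Fixpoint g (s : S) n v : nat :=
  if n is n'.+1 then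
    maxn (if v == lab s then (hyb' v).+1 else 0)
         (fmax (fun w => if E v w then
                    (let x := g s n' w in if x == 0 then 0 else x + hyb' v) else 0))
  else if v == lab s then (hyb' v).+1 else 0.

Lemma g0_le s n v : ((if v == lab s then (hyb' v).+1 else 0) <= g s n v)%N.
Proof. by case: n => [|n] //=; apply: leq_maxl. Qed.

Lemma g_base s n v m : (if v == lab s then (hyb' v).+1 else 0) = m.+1 ->
   exists p, [/\ (size p <= n)%N, path E v p, last v p = lab s & hybcount v p = m].
Proof.
case: eqP => // -> [<-]; exists [::]; split => //.
by rewrite /hybcount /= hybridE addn0.
Qed.

Lemma g_sound s n v m : g s n v = m.+1 ->
  exists p, [/\ (size p <= n)%N, path E v p, last v p = lab s & hybcount v p = m].
Proof.
elim: n v m => [|n IH] v m /=; first exact: g_base.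
rewrite {1}/maxn; case: ltnP => H; last exact: g_base.
case: (fmax_ex (fun w => if E v w then (let x := g s n w in if x == 0 then 0 else x + hyb' v) else 0)) => [->//|[w ->]].
case Evw: (E v w) => //=; case gw: (g s n w) => [//|m'] /= [<-].
have [p [Hs Hp Hl Hc]] := IH w m' gw.
exists (w :: p); split => //=; first by rewrite Evw.
by rewrite -Hc /hybcount /= hybridE addnC. 
Qed.

Lemma g_complete s n v p : path E v p -> last v p = lab s -> (size p <= n)%N ->
  (hybcount v p < g s n v)%N.
Proof.
elim: n v p => [|n IH] v [|w p] //=.
- move=> _ ->; rewrite eqxx /hybcount /= hybridE addn0 => _; exact: ltnSn.
- move=> _ ->; rewrite eqxx /hybcount /= hybridE addn0 => _.
  by apply: leq_trans (leq_maxl _ _); exact: ltnSn.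
- case/andP=> Evw Hp Hl Hs.
  have Hw := IH w p Hp Hl Hs.
  apply: leq_trans (leq_maxr _ _).
  apply: leq_trans (fmax_ge _ w).
  rewrite Evw /=; case gw: (g s n w) Hw => [//|m'] Hw /=.
  by rewrite /hybcount /= -/(hybcount w p) hybridE addnC ltn_add2r.
Qed.

Lemma weightP v s n : boundb -> is_weight v s n <-> g s K v = n.+1.
Proof.
move=> Hb; split.
- case=> [[p [Hp Hl Hc]] Hmax].
  have := g_complete Hp Hl (ltnW (bound_path Hb Hp)); rewrite Hc.
  case gv: (g s K v) => [//|m] Hnm.
  have [q [_ Hq Hql Hqc]] := g_sound gv.
  have := Hmax q Hq Hql; rewrite Hqc => Hmn.
  by apply/eqP; rewrite eqSS eqn_leq Hmn.
- move=> gv; have [p [_ Hp Hl Hc]] := g_sound gv; split; first by exists p.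
  move=> q Hq Hql; have := g_complete Hq Hql (ltnW (bound_path Hb Hq)).
  by rewrite gv.
Qed.

Definition acyclicb := all (fun u => all (fun v => if E u v then ~~ rk E K v u else true) l) l.
Lemma acyclicP : boundb -> acyclicb -> acyclic N.
Proof.
move=> Hb H u v Euv; have := allL (allL H u) v; rewrite Euv.
by rewrite (rkE _ _ (fun x y (h : E x y) => h)).
Qed.

Definition rootb r := all (fun v => (indeg' v == 0) == (v == r)) l.
Lemma rootedP r : rootb r -> rooted N.
Proof.
move=> H; exists r => v; have := allL H v; rewrite /is_root indegE.
by move/eqP->; split => /eqP.
Qed.

Definition labb := all (fun v => (outdeg' v == 0) == has (fun s => lab s == v) lS) l.
Lemma labP : injective lab -> labb -> labeled_in_S N.
Proof.
move=> Hi H; split => // v; have := allL H v; rewrite outdegE.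
move/eqP=> Heq; split.
- by move/eqP; rewrite Heq => /hasP[s _ /eqP <-]; exists s.
- case=> s Hs; apply/eqP; rewrite Heq; apply/hasP; exists s => //; by rewrite Hs.
Qed.

Definition c1b := all (fun v => [&& (indeg' v <= 2)%N, (outdeg' v <= 2)%N & indeg' v != outdeg' v]) l.
Lemma c1P : c1b -> cond1 N.
Proof.
by move=> H v; have := allL H v; rewrite indegE outdegE => /and3P[*]; split.
Qed.

Definition c2b := all (fun v => all (fun w1 => if E v w1 then all (fun w2 =>
   if E v w2 then (w1 != w2) ==> (tree' w1 || tree' w2) else true) l else true) l) l.
Lemma c2P : c2b -> cond2 N.
Proof.
move=> H v w1 w2 E1 E2 ne; have := allL (allL H v) w1; rewrite E1.
move/allL/(_ w2); rewrite E2 ne /= !treeE; by case/orP; [left|right].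
Qed.

Definition c3ab := all (fun u => all (fun u1 => if E u1 u then all (fun u2 =>
   if E u2 u && (u1 != u2) then ~~ rk E K u1 u2 else true) l else true) l) l.
Lemma c3aP : boundb -> c3ab -> cond3a N.
Proof.
move=> Hb H u u1 u2 E1 E2 ne; have := allL (allL H u) u1; rewrite E1.
move/allL/(_ u2); rewrite E2 ne /=.
by rewrite (rkE _ _ (fun x y (h : E x y) => h)).
Qed.

Definition c3bb := all (fun u => all (fun u1 => if E u1 u then all (fun u2 =>
   if E u2 u && (u1 != u2) then all (fun v => if u != v then all (fun v1 =>
   if E v1 v then all (fun v2 => if E v2 v && (v1 != v2) then
     (if rk E K u1 v1 then ~~ rk E K v2 u1 && ~~ rk E K v2 u2 else true) else true) l
   else true) l else true) l else true) l else true) l) l.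
Lemma c3bP : boundb -> c3bb -> cond3b N.
Proof.
move=> Hb H u u1 u2 v v1 v2 uv E1 E2 n12 F1 F2 m12.
have := allL (allL H u) u1; rewrite E1 => /allL/(_ u2); rewrite E2 n12 /=.
move/allL/(_ v); rewrite uv => /allL/(_ v1); rewrite F1 => /allL/(_ v2).
rewrite F2 m12 /= !(rkE _ _ (fun x y (h : E x y) => h)) //.
by move=> Hc Hr; move: Hc; rewrite Hr => /andP[-> ->].
Qed.

Definition classIb := all (fun v => hyb' v ==> has (fun u => E u v && tree' u) l) l.
Lemma classIP : classIb -> class_I N.
Proof.
move=> H v; rewrite hybridE => hv; have := allL H v; rewrite hv /=.
by case/hasP=> u _ /andP[Euv tu]; exists u; rewrite treeE.
Qed.

End G.
Section Two.
Variables N1 N2 : network.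
Variable l1 : seq (nV N1).
Hypothesis l1P : forall x, x \in l1.
Hypothesis l1U : uniq l1.
Variable l2 : seq (nV N2).
Hypothesis l2P : forall x, x \in l2.
Hypothesis l2U : uniq l2.
Variable lS : seq S.
Hypothesis lSP : forall s, s \in lS.
Variables K1 K2 : nat.
Hypothesis B1 : boundb l1 K1.
Hypothesis B2 : boundb l2 K2.

Definition swt (v1 : nV N1) (v2 : nV N2) :=
  all (fun s => [&& inAb l1 K1 v1 s == inAb l2 K2 v2 s,
                    rk l1 (nE N1) K1 v1 (nlab N1 s) == rk l2 (nE N2) K2 v2 (nlab N2 s)
                  & g l1 s K1 v1 == g l2 s K2 v2]) lS.

Lemma swtP v1 v2 : swt v1 v2 -> same_wtrip v1 v2.
Proof.
move/allP=> H s; have /and3P[/eqP HA /eqP HC /eqP Hg] := H s (lSP s).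
have EA : inA v1 s <-> inA v2 s.
  split=> h.
    by apply/(inAP l2P l2U _ _ B2); rewrite -HA; apply/(inAP l1P l1U _ _ B1).
  by apply/(inAP l1P l1U _ _ B1); rewrite HA; apply/(inAP l2P l2U _ _ B2).
have EC : inC v1 s <-> inC v2 s.
  split=> h.
    by apply/(inCP l2P _ _ B2); rewrite -HC; apply/(inCP l1P _ _ B1).
  by apply/(inCP l1P _ _ B1); rewrite HC; apply/(inCP l2P _ _ B2).
split.
- exact: EA.
- rewrite /inB; split.
  + case=> a b; split; first exact/EC.
    by move=> h; apply: b; apply/EA.
  + case=> a b; split; first exact/EC.
    by move=> h; apply: b; apply/EA.
- by split=> Hn Hc; apply: Hn; apply/EC.
- move=> _ n; split=> h.
    by apply/(weightP l2P l2U _ _ _ B2); rewrite -Hg; apply/(weightP l1P l1U _ _ _ B1).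
  by apply/(weightP l1P l1U _ _ _ B1); rewrite Hg; apply/(weightP l2P l2U _ _ _ B2).
Qed.

Definition thetab :=
  all (fun u1 => all (fun v1 => if nE N1 u1 v1 then
     has (fun u2 => has (fun v2 => if nE N2 u2 v2 then swt v1 v2 else false) l2) l2
     else true) l1) l1 &&
  all (fun u2 => all (fun v2 => if nE N2 u2 v2 then
     has (fun u1 => has (fun v1 => if nE N1 u1 v1 then swt v1 v2 else false) l1) l1
     else true) l2) l2.

Lemma thetaP : thetab -> theta_AB_eq N1 N2.
Proof.
case/andP=> H1 H2; split.
- move=> u1 v1 E1; have := allL l1P (allL l1P H1 u1) v1; rewrite E1.
  case/hasP=> u2 _ /hasP[v2 _]; case E2: (nE N2 u2 v2) => // Hs.
  by exists u2, v2; split => //; apply: swtP.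
- move=> u2 v2 E2; have := allL l2P (allL l2P H2 u2) v2; rewrite E2.
  case/hasP=> u1 _ /hasP[v1 _]; case E1: (nE N1 u1 v1) => // Hs.
  by exists u1, v1; split => //; apply: swtP.
Qed.
End Two.

Definition chainb (N : network) (l : seq (nV N)) (s : S) :=
  has (fun x1 => has (fun x2 => if nE N x1 x2 then has (fun x3 => if nE N x2 x3 then
     has (fun x4 => if nE N x3 x4 then nE N x4 (nlab N s) else false) l else false) l
     else false) l) l.

Lemma chain_iso N1 N2 (l1 : seq (nV N1)) (l2 : seq (nV N2)) s :
  (forall x, x \in l2) -> isomorphic N1 N2 -> chainb l1 s -> chainb l2 s.
Proof.
move=> l2P [f [_ Hf Hl]].
have F u v : nE N1 u v -> nE N2 (f u) (f v) by move=> h; apply/(proj1 (Hf u v)).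
case/hasP=> x1 _ /hasP[x2 _]; case E12: (nE N1 x1 x2) => //.
case/hasP=> x3 _; case E23: (nE N1 x2 x3) => //.
case/hasP=> x4 _; case E34: (nE N1 x3 x4) => // E4.
apply/hasP; exists (f x1) => //; apply/hasP; exists (f x2) => //.
rewrite (F _ _ E12); apply/hasP; exists (f x3) => //.
rewrite (F _ _ E23); apply/hasP; exists (f x4) => //.
by rewrite (F _ _ E34) -Hl; apply: F.
Qed.
Definition arcs1 : seq (nat * nat) :=
 [:: (6,2); (7,6); (8,7); (9,8); (10,4); (10,1); (9,11); (11,3); (8,12); (12,1);
     (11,12); (7,13); (13,5); (6,0); (0,10); (13,0)].
Definition arcs2 : seq (nat * nat) :=
 [:: (6,2); (7,12); (8,7); (9,8); (10,4); (10,1); (9,11); (11,3); (8,6); (12,1);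
     (11,12); (7,13); (13,5); (6,0); (0,10); (13,0)].
Definition mkE (a : seq (nat*nat)) : rel 'I_14 := fun u v => (nat_of_ord u, nat_of_ord v) \in a.
Definition labf (s : S) : 'I_14 := widen_ord (isT : (6 <= 14)%N) (val s).
Definition N1 := Network (mkE arcs1) labf.
Definition N2 := Network (mkE arcs2) labf.

Definition l14 : seq 'I_14 :=
  [:: @Ordinal 14 0 isT; @Ordinal 14 1 isT; @Ordinal 14 2 isT; @Ordinal 14 3 isT;
      @Ordinal 14 4 isT; @Ordinal 14 5 isT; @Ordinal 14 6 isT; @Ordinal 14 7 isT;
      @Ordinal 14 8 isT; @Ordinal 14 9 isT; @Ordinal 14 10 isT; @Ordinal 14 11 isT;
      @Ordinal 14 12 isT; @Ordinal 14 13 isT].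
Lemma l14E : l14 = ord_enum 14.
Proof. by apply: (inj_map val_inj); rewrite val_ord_enum. Qed.
Lemma l14P x : x \in l14.
Proof. by rewrite l14E mem_ord_enum. Qed.
Lemma l14U : uniq l14.
Proof. by rewrite l14E ord_enum_uniq. Qed.

Definition mkS (n : nat) (h : (n < 6)%N) (h' : (0 < n)%N) : S := exist _ (Ordinal h) h'.
Definition lS5 : seq S := [:: @mkS 1 isT isT; @mkS 2 isT isT; @mkS 3 isT isT; @mkS 4 isT isT; @mkS 5 isT isT].
Lemma lS5P s : s \in lS5.
Proof.
case: s => [[m Hm] Hp].
by case: m Hm Hp => [|[|[|[|[|[|m]]]]]] Hm Hp.
Qed.

Lemma labf_inj : injective labf.
Proof. by move=> x y /(congr1 val) /= /val_inj /val_inj. Qed.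

Definition s2 : S := @mkS 2 isT isT.

Lemma phylo1 (a : seq (nat * nat)) :
  let N := Network (mkE a) labf in
  boundb (N:=N) l14 7 -> acyclicb (N:=N) l14 7 -> rootb (N:=N) l14 (@Ordinal 14 9 isT) ->
  labb (N:=N) l14 lS5 -> c1b (N:=N) l14 -> c2b (N:=N) l14 -> c3ab (N:=N) l14 7 ->
  c3bb (N:=N) l14 7 -> classIb (N:=N) l14 ->
  phylogenetic_network N /\ class_I N.
Proof.
move=> N Hb Ha Hr Hl H1 H2 H3a H3b HI; split; last exact: (classIP (N:=N) l14P l14U).
split.
- exact: (acyclicP (N:=N) l14P Hb).
- exact: (rootedP (N:=N) l14P l14U Hr).
- exact: (labP (N:=N) l14P l14U lS5P labf_inj).
- exact: (c1P (N:=N) l14P l14U).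
- split.
  + exact: (c2P (N:=N) l14P l14U).
  + exact: (c3aP (N:=N) l14P Hb).
  + exact: (c3bP (N:=N) l14P Hb).
Qed.

Theorem mainTheorem1 :
  exists N1 N2 : network,
    [/\ phylogenetic_network N1, phylogenetic_network N2,
        class_I N1, class_I N2
      & ~ isomorphic N1 N2 /\ theta_AB_eq N1 N2].
Proof.
have [P1 C1] : phylogenetic_network N1 /\ class_I N1.
  by apply: phylo1; vm_compute; reflexivity.
have [P2 C2] : phylogenetic_network N2 /\ class_I N2.
  by apply: phylo1; vm_compute; reflexivity.
exists N1, N2; split => //; split.
- have h1 : chainb (N:=N1) l14 s2 by vm_compute; reflexivity.
  have h2 : chainb (N:=N2) l14 s2 = false by vm_compute; reflexivity.
  by move=> Hi; rewrite (@chain_iso N1 N2 l14 l14 s2 l14P Hi h1) in h2.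
- apply: (thetaP (N1:=N1) (N2:=N2) l14P l14U l14P l14U lS5P (K1:=7) (K2:=7)).
  + by vm_compute; reflexivity.
  + by vm_compute; reflexivity.
  + by vm_compute; reflexivity.
Qed.
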